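(* Let $(X,\tau)$ be a topological space and let $\delta_1,\delta_2$ be quasi-proximities compatible with $\tau$ such that $\delta_1$ is coarser than $\delta_2$ and both $\mathcal{V}_{\delta_1}$ and $\mathcal{V}_{\delta_2}$ are transitive. If $|\pi(\delta_1)\cap T(\tau)|>1$, then $|\pi(\delta_2)\cap T(\tau)|>1$.
   Context: Quasi-uniformities and quasi-proximities are in the sense of Fletcher–Lindgren. $\delta_1$ coarser than $\delta_2$ means that whenever $A\,\delta_2\,B$ then $A\,\delta_1\,B$ (equivalently $\mathcal{V}_{\delta_1}\subseteq\mathcal{V}_{\delta_2}$). $\pi(\delta)$ is the set of quasi-uniformities inducing $\delta$ and $\mathcal{V}_\delta$ is its coarsest (totally bounded) element. $T(\tau)$ is the set of quasi-uniformities compatible with $\tau$ that have a base of transitive entourages. *)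

(* Defs.v *)
From Stdlib Require Import List.
Import ListNotations.

Definition set (X : Type) := X -> Prop.
Definition rel (X : Type) := X -> X -> Prop.

Definition setU {X} (A B : set X) : set X := fun x => A x \/ B x.
Definition setC {X} (A : set X) : set X := fun x => ~ A x.
Definition set1 {X} (x : X) : set X := fun y => y = x.
Definition set0 {X} : set X := fun _ => False.

Definition is_topology {X} (tau : set X -> Prop) : Prop :=
  tau (fun _ => True) /\ tau set0 /\
  (forall G H, tau G -> tau H -> tau (fun x => G x /\ H x)) /\
  (forall F : set X -> Prop, (forall G, F G -> tau G) ->
      tau (fun x => exists G, F G /\ G x)).

(* Relational composition: (x,z) in V o W iff exists y, (x,y) in W... 
   we only use V o V, so orientation is irrelevant. *)
Definition rcomp {X} (V W : rel X) : rel X := fun x z => exists y, V x y /\ W y z.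
Definition rsub {X} (U V : rel X) : Prop := forall x y, U x y -> V x y.

Definition is_quasi_uniformity {X} (Q : rel X -> Prop) : Prop :=
  Q (fun _ _ => True) /\
  (forall U V, Q U -> rsub U V -> Q V) /\
  (forall U V, Q U -> Q V -> Q (fun x y => U x y /\ V x y)) /\
  (forall U, Q U -> forall x, U x x) /\
  (forall U, Q U -> exists V, Q V /\ rsub (rcomp V V) U).

Definition qu_compatible {X} (Q : rel X -> Prop) (tau : set X -> Prop) : Prop :=
  forall G, tau G <-> (forall x, G x -> exists U, Q U /\ forall y, U x y -> G y).

Definition qu_transitive {X} (Q : rel X -> Prop) : Prop :=
  forall U, Q U -> exists V, Q V /\ rsub V U /\
    (forall x y z, V x y -> V y z -> V x z).

Definition in_T {X} (tau : set X -> Prop) (Q : rel X -> Prop) : Prop :=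
  is_quasi_uniformity Q /\ qu_compatible Q tau /\ qu_transitive Q.

Definition is_quasi_proximity {X} (d : set X -> set X -> Prop) : Prop :=
  (forall A B C, d A (setU B C) <-> (d A B \/ d A C)) /\
  (forall A B C, d (setU A B) C <-> (d A C \/ d B C)) /\
  (forall A, ~ d set0 A) /\ (forall A, ~ d A set0) /\
  (forall x, d (set1 x) (set1 x)) /\
  (forall A B, ~ d A B -> exists C, ~ d A C /\ ~ d (setC C) B).

(* Topology induced by a quasi-proximity: cl A = {x | {x} d A}. *)
Definition qp_compatible {X} (d : set X -> set X -> Prop) (tau : set X -> Prop) : Prop :=
  forall G, tau G <-> (forall x, G x -> ~ d (set1 x) (setC G)).

Definition qp_coarser {X} (d1 d2 : set X -> set X -> Prop) : Prop :=
  forall A B, d2 A B -> d1 A B.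

Definition qu_prox {X} (Q : rel X -> Prop) : set X -> set X -> Prop :=
  fun A B => forall U, Q U -> exists x y, A x /\ B y /\ U x y.

Definition in_pi {X} (d : set X -> set X -> Prop) (Q : rel X -> Prop) : Prop :=
  is_quasi_uniformity Q /\ forall A B, qu_prox Q A B <-> d A B.

(* V_d : the quasi-uniformity with subbase
   U_{A,B} = ((X\A) x X) u (X x (X\B)) for A non-d B. *)
Definition Vdelta {X} (d : set X -> set X -> Prop) : rel X -> Prop :=
  fun W => exists l : list (set X * set X),
    Forall (fun p => ~ d (fst p) (snd p)) l /\
    forall x y, Forall (fun p => ~ fst p x \/ ~ snd p y) l -> W x y.

Definition two_in_pi_T {X} (d : set X -> set X -> Prop) (tau : set X -> Prop) : Prop :=
  exists Q1 Q2, in_pi d Q1 /\ in_T tau Q1 /\ in_pi d Q2 /\ in_T tau Q2 /\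
    ~ (forall W, Q1 W <-> Q2 W).

(* Main.v *)
Require Import Defs.
From Stdlib Require Import List Classical FunctionalExtensionality PropExtensionality.
Import ListNotations.

Definition Wl {X} (l : list (set X * set X)) : rel X :=
  fun x y => Forall (fun p => ~ fst p x \/ ~ snd p y) l.

Definition far {X} (d : set X -> set X -> Prop) (p : set X * set X) : Prop :=
  ~ d (fst p) (snd p).

Definition J {X} (Q1 Q2 : rel X -> Prop) : rel X -> Prop :=
  fun R => exists U W, Q1 U /\ Q2 W /\ rsub (fun x y => U x y /\ W x y) R.

Lemma mono {X} (d : set X -> set X -> Prop) : is_quasi_proximity d ->
  forall A A' B B', (forall x, A x -> A' x) -> (forall x, B x -> B' x) -> d A B -> d A' B'.
Proof.
  intros [HU1 [HU2 _]] A A' B B' HA HB H.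
  assert (EA : A' = setU A A').
  { apply functional_extensionality; intro x; apply propositional_extensionality;
    unfold setU; split; [tauto| intros [h|h]; auto]. }
  assert (EB : B' = setU B B').
  { apply functional_extensionality; intro x; apply propositional_extensionality;
    unfold setU; split; [tauto| intros [h|h]; auto]. }
  rewrite EA, EB. apply HU1. left. apply HU2. left. exact H.
Qed.

Lemma far_disj {X} (d : set X -> set X -> Prop) : is_quasi_proximity d ->
  forall C D, ~ d C D -> forall x, ~ (C x /\ D x).
Proof.
  intros Hq C D HCD x [Hc Hd]. apply HCD.
  apply (mono d Hq (set1 x) C (set1 x) D).
  - intros y Hy; unfold set1 in Hy; subst; auto.
  - intros y Hy; unfold set1 in Hy; subst; auto.
  - destruct Hq as (_&_&_&_&H5&_). apply H5.
Qed.

Lemma nonempty {X} (d : set X -> set X -> Prop) : is_quasi_proximity d ->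
  forall A B, d A B -> (exists x, A x) /\ (exists y, B y).
Proof.
  intros Hq A B H. split; apply NNPP; intro hn.
  - pose proof Hq as Hq'. destruct Hq as (_&_&H3&_). apply (H3 B). apply (mono d Hq' A _ B B); auto.
    intros x Ax; exfalso; apply hn; eauto.
  - pose proof Hq as Hq'. destruct Hq as (_&_&_&H4&_). apply (H4 A).
    apply (mono d Hq' A A B _); auto.
    intros x Ax; exfalso; apply hn; eauto.
Qed.

Lemma prox_ext {X} (d : set X -> set X -> Prop) (R : rel X) : is_quasi_proximity d ->
  (forall A B, d A B -> exists x y, A x /\ B y /\ R x y) ->
  forall l, Forall (far d) l -> forall A B, d A B ->
    exists x y, A x /\ B y /\ R x y /\ Wl l x y.
Proof.
  intros Hq HR l. induction l as [|[C D] l IH]; intros Hl A B H.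
  - destruct (HR A B H) as (x&y&h1&h2&h3). exists x, y; repeat split; auto. constructor.
  - pose proof (Forall_inv Hl) as HCD. pose proof (Forall_inv_tail Hl) as Hl'.
    unfold far in HCD; simpl in HCD.
    pose proof Hq as Hq'. destruct Hq' as (HU1&HU2&_).
    assert (H1 : d (setU (fun x => A x /\ ~ C x) (fun x => A x /\ C x)) B).
    { apply (mono d Hq A _ B B); auto. intros x Ax. unfold setU.
      destruct (classic (C x)); auto. }
    apply HU2 in H1. destruct H1 as [H1|H1].
    + destruct (IH Hl' _ _ H1) as (x&y&[Ax nCx]&By&Rxy&W).
      exists x, y; repeat split; auto. apply Forall_cons; auto.
    + assert (H2 : d (fun x => A x /\ C x) (setU (fun y => B y /\ ~ D y) (fun y => B y /\ D y))).
      { apply (mono d Hq (fun x => A x /\ C x) _ B _); auto. intros y By. unfold setU.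
        destruct (classic (D y)); auto. }
      apply HU1 in H2. destruct H2 as [H2|H2].
      * destruct (IH Hl' _ _ H2) as (x&y&[Ax Cx]&[By nDy]&Rxy&W).
        exists x, y; repeat split; auto. apply Forall_cons; auto.
      * exfalso. apply HCD. revert H2. apply (mono d Hq _ C _ D).
        -- intros x [_ h]; exact h.
        -- intros x [_ h]; exact h.
Qed.

Lemma Vd_prox {X} (d : set X -> set X -> Prop) : is_quasi_proximity d ->
  forall A B, qu_prox (Vdelta d) A B <-> d A B.
Proof.
  intros Hq A B. split.
  - intros H. apply NNPP; intro Hn.
    destruct (H (fun x y => ~ A x \/ ~ B y)) as (x&y&Ax&By&Hxy).
    + exists [(A,B)]; split.
      * constructor; auto.
      * intros x0 y0 Hf. exact (Forall_inv Hf).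
    + destruct Hxy; auto.
  - intros H W (l&Hl&HW).
    assert (Hb : forall A B, d A B -> exists x y, A x /\ B y /\ (fun _ _ : X => True) x y).
    { intros A' B' h. destruct (nonempty d Hq A' B' h) as [[x hx] [y hy]].
      exists x, y; auto. }
    destruct (prox_ext d _ Hq Hb l Hl A B H) as (x&y&h1&h2&_&h4).
    exists x, y; repeat split; auto.
Qed.

Lemma trans_comp {X} (Q : rel X -> Prop) : qu_transitive Q ->
  forall U, Q U -> exists V, Q V /\ rsub (rcomp V V) U.
Proof.
  intros Ht U HU. destruct (Ht U HU) as (V&HV&HVU&Htr).
  exists V; split; auto. intros x z (y&h1&h2). eauto.
Qed.

Lemma Vd_qu {X} (d : set X -> set X -> Prop) : is_quasi_proximity d ->
  qu_transitive (Vdelta d) -> is_quasi_uniformity (Vdelta d).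
Proof.
  intros Hq Ht. split; [|split; [|split; [|split]]].
  - exists []; split; [constructor| intros; exact I].
  - intros U V (l&Hl&HU) HUV. exists l; split; auto.
  - intros U V (l1&Hl1&HU) (l2&Hl2&HV). exists (l1 ++ l2). split.
    + apply Forall_app; auto.
    + intros x y h. apply Forall_app in h. destruct h. split; auto.
  - intros U (l&Hl&HU) x. apply HU.
    refine (Forall_impl _ _ Hl). intros [C D] h. simpl in *.
    apply not_and_or. exact (far_disj d Hq C D h x).
  - apply trans_comp; auto.
Qed.

Lemma NB {X} (tau : set X -> Prop) (d : set X -> set X -> Prop) (Q : rel X -> Prop) :
  is_quasi_proximity d -> qp_compatible d tau -> is_quasi_uniformity Q ->
  qu_compatible Q tau ->
  forall l, Forall (far d) l -> forall x, exists U, Q U /\ forall y, U x y -> Wl l x y.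
Proof.
  intros Hq Hc HQ HQc l. destruct HQ as (Qtop&Qup&Qint&_).
  induction l as [|[C D] l IH]; intros Hl x.
  - exists (fun _ _ => True); split; auto. intros; constructor.
  - pose proof (Forall_inv Hl) as HCD. pose proof (Forall_inv_tail Hl) as Hl'.
    unfold far in HCD; simpl in HCD.
    destruct (IH Hl' x) as (U0&HU0&HW0).
    destruct (classic (C x)) as [Cx|nCx].
    + set (O := fun z => ~ d (set1 z) D).
      assert (tO : tau O).
      { apply (Hc O). intros z Oz Hcz.
        pose proof Hq as Hq'. destruct Hq' as (_&_&_&_&_&H6).
        destruct (H6 (set1 z) D Oz) as (E&h1&h2). apply h1.
        apply (mono d Hq (set1 z) _ (setC O) _); auto.
        intros w Hw. apply NNPP; intro Ew. apply Hw. intro hd. apply h2.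
        apply (mono d Hq (set1 w) _ D _); auto.
        intros v Hv; unfold set1 in Hv; subst; exact Ew. }
      assert (Ox : O x).
      { intro h. apply HCD. revert h. apply (mono d Hq (set1 x) C D D).
        - intros v Hv; unfold set1 in Hv; subst; exact Cx.
        - intros v Hv; exact Hv. }
      destruct (proj1 (HQc O) tO x Ox) as (U1&HU1&HUO).
      exists (fun a b => U1 a b /\ U0 a b). split; [apply Qint; auto|].
      intros y [h1 h2]. apply Forall_cons; [|exact (HW0 y h2)]. simpl. right. intro Dy.
      apply (HUO y h1). 
      pose proof Hq as Hq'. destruct Hq' as (_&_&_&_&H5&_).
      revert H5. intro H5. specialize (H5 y). revert H5.
      apply (mono d Hq (set1 y) (set1 y) (set1 y) D).
      * intros v Hv; exact Hv.
      * intros v Hv; unfold set1 in Hv; subst; exact Dy.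
    + exists U0. split; auto. intros y h. apply Forall_cons; [left; exact nCx| exact (HW0 y h)].
Qed.

Lemma Vd_compat {X} (tau : set X -> Prop) (d : set X -> set X -> Prop) (Q : rel X -> Prop) :
  is_quasi_proximity d -> qp_compatible d tau -> is_quasi_uniformity Q ->
  qu_compatible Q tau -> qu_compatible (Vdelta d) tau.
Proof.
  intros Hq Hc HQ HQc G. split.
  - intros HG x Gx. pose proof (proj1 (Hc G) HG x Gx) as Hf.
    exists (Wl [(set1 x, setC G)]). split.
    + exists [(set1 x, setC G)]; split; [constructor; [exact Hf| constructor]| intros a b h; exact h].
    + intros y h. pose proof (Forall_inv h) as h'. simpl in h'.
      destruct h' as [h'|h']. exfalso; apply h'; reflexivity.
      apply NNPP; exact h'.
  - intros H. apply (HQc G). intros x Gx.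
    destruct (H x Gx) as (W&(l&Hl&HW)&HWG).
    destruct (NB tau d Q Hq Hc HQ HQc l Hl x) as (U&HU&HUW).
    exists U; split; [exact HU|]. intros y h. apply HWG, HW, HUW, h.
Qed.

Lemma J_trans {X} (Q1 Q2 : rel X -> Prop) :
  qu_transitive Q1 -> qu_transitive Q2 -> qu_transitive (J Q1 Q2).
Proof.
  intros T1 T2 R (U&W&HU&HW&HR).
  destruct (T1 U HU) as (U'&HU'&HUU&TU). destruct (T2 W HW) as (W'&HW'&HWW&TW).
  exists (fun x y => U' x y /\ W' x y). split; [|split].
  - exists U', W'; split; [exact HU'|split; [exact HW'| intros a b h; exact h]].
  - intros x y [h1 h2]. apply HR; split; auto.
  - intros x y z [a b] [c e]; split; eauto.
Qed.

Lemma J_qu {X} (Q1 Q2 : rel X -> Prop) :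
  is_quasi_uniformity Q1 -> is_quasi_uniformity Q2 ->
  qu_transitive Q1 -> qu_transitive Q2 -> is_quasi_uniformity (J Q1 Q2).
Proof.
  intros (t1&u1&i1&r1&_) (t2&u2&i2&r2&_) T1 T2. split; [|split; [|split; [|split]]].
  - exists (fun _ _ => True), (fun _ _ => True); split; [exact t1|split; [exact t2| intros x y _; exact I]].
  - intros U V (A&B&HA&HB&HR) HUV. exists A, B; split; [exact HA|split; [exact HB| intros x y h; apply HUV, HR, h]].
  - intros U V (A&B&HA&HB&HR) (A'&B'&HA'&HB'&HR').
    exists (fun x y => A x y /\ A' x y), (fun x y => B x y /\ B' x y).
    split; [apply i1; auto|split; [apply i2; auto|]]. intros x y [[a a'] [b b']]. split; [apply HR; split|apply HR'; split]; assumption.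
  - intros U (A&B&HA&HB&HR) x. apply HR; split; [apply r1|apply r2]; assumption.
  - apply trans_comp, J_trans; auto.
Qed.

Lemma J_compat {X} (tau : set X -> Prop) (d : set X -> set X -> Prop) (Q : rel X -> Prop) :
  is_quasi_proximity d -> qp_compatible d tau -> is_quasi_uniformity Q ->
  qu_compatible Q tau -> qu_compatible (J Q (Vdelta d)) tau.
Proof.
  intros Hq Hc HQ HQc G. split.
  - intros HG x Gx. destruct (proj1 (HQc G) HG x Gx) as (U&HU&HUG).
    exists U. split; [|exact HUG]. exists U, (fun _ _ => True). split; [exact HU|split].
    + exists []; split; [constructor| intros; exact I].
    + intros a b [h _]; exact h.
  - intros H. apply (HQc G). intros x Gx.
    destruct (H x Gx) as (R&(U&W&HU&(l&Hl&HW)&HR)&HRG).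
    destruct (NB tau d Q Hq Hc HQ HQc l Hl x) as (U0&HU0&HUW).
    destruct HQ as (_&_&Qint&_).
    exists (fun a b => U a b /\ U0 a b). split; [apply Qint; assumption|].
    intros y [h1 h2]. apply HRG, HR. split; [exact h1| apply HW, HUW, h2].
Qed.

Lemma J_prox {X} (d1 d2 : set X -> set X -> Prop) (Q : rel X -> Prop) :
  is_quasi_proximity d2 -> in_pi d1 Q -> qp_coarser d1 d2 ->
  forall A B, qu_prox (J Q (Vdelta d2)) A B <-> d2 A B.
Proof.
  intros Hq [HQ Hpi] Hco A B. split.
  - intros H. apply (Vd_prox d2 Hq). intros W HW. apply H.
    exists (fun _ _ => True), W. destruct HQ as (t&_). split; [exact t|split; [exact HW|]].
    intros x y [_ h]; exact h.
  - intros H R (U&W&HU&(l&Hl&HW)&HR).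
    assert (Hb : forall A B, d2 A B -> exists x y, A x /\ B y /\ U x y).
    { intros A' B' h. apply (proj2 (Hpi A' B') (Hco _ _ h) U HU). }
    destruct (prox_ext d2 U Hq Hb l Hl A B H) as (x&y&h1&h2&h3&h4).
    exists x, y; split; [exact h1|split; [exact h2|]]. apply HR; split; [exact h3| apply HW, h4].
Qed.

Lemma coarsest {X} (d : set X -> set X -> Prop) (Q : rel X -> Prop) :
  in_pi d Q -> forall W, Vdelta d W -> Q W.
Proof.
  intros [HQ Hpi] W (l&Hl&HW). destruct HQ as (Qt&Qup&Qint&_).
  apply (Qup (Wl l)); [|exact HW]. clear HW.
  induction l as [|[C D] l IH].
  - apply (Qup _ _ Qt). intros; constructor.
  - pose proof (Forall_inv Hl) as HCD. pose proof (Forall_inv_tail Hl) as Hl'.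
    simpl in HCD.
    assert (Hn : ~ qu_prox Q C D). { intro h; apply HCD, Hpi, h. }
    unfold qu_prox in Hn. apply not_all_ex_not in Hn. destruct Hn as (U&Hn).
    apply imply_to_and in Hn. destruct Hn as (HU&Hn).
    apply (Qup _ _ (Qint _ _ HU (IH Hl'))).
    intros x y [h1 h2]. apply Forall_cons; auto. simpl.
    destruct (classic (C x)) as [Cx|nCx]; auto.
    right; intro Dy; apply Hn; eauto.
Qed.

Lemma TB {X} (d1 d2 : set X -> set X -> Prop) (Q : rel X -> Prop) (V : rel X) :
  in_pi d1 Q -> is_quasi_proximity d2 -> Q V ->
  forall l, Forall (far d2) l -> forall E : set X,
    (forall x y, E x -> E y -> Wl l x y -> V x y) ->
    exists l', Forall (far d1) l' /\ forall x y, E x -> Wl l' x y -> rcomp V V x y.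
Proof.
  intros [HQ Hpi] Hq HV l. induction l as [|[C D] l IH]; intros Hl E H.
  - exists [(E, fun y => ~ exists a, E a /\ V a y)]. split.
    + constructor; [|constructor]. unfold far; simpl. intro hd.
      destruct (proj2 (Hpi _ _) hd V HV) as (x&y&Ex&ny&Vxy). apply ny; eauto.
    + intros x y Ex Hw. pose proof (Forall_inv Hw) as h; simpl in h.
      destruct h as [h|h]; [contradiction|]. apply NNPP in h.
      destruct h as (a&Ea&Vay). exists a; split; auto. apply H; auto. constructor.
  - pose proof (Forall_inv Hl) as HCD. pose proof (Forall_inv_tail Hl) as Hl'.
    unfold far in HCD; simpl in HCD.
    destruct (IH Hl' (fun x => E x /\ ~ C x)) as (l1&Hl1&H1).
    { intros x y [Ex nCx] [Ey _] Hw. apply H; auto. apply Forall_cons; auto. }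
    destruct (IH Hl' (fun x => E x /\ ~ D x)) as (l2&Hl2&H2).
    { intros x y [Ex _] [Ey nDy] Hw. apply H; auto. apply Forall_cons; auto. }
    exists (l1 ++ l2). split; [apply Forall_app; auto|].
    intros x y Ex Hw. apply Forall_app in Hw. destruct Hw as [w1 w2].
    destruct (classic (C x)) as [Cx|nCx].
    + apply H2; auto. split; auto. intro Dx. exact (far_disj d2 Hq C D HCD x (conj Cx Dx)).
    + apply H1; auto.
Qed.

Lemma TB_incl {X} (d1 d2 : set X -> set X -> Prop) (Q : rel X -> Prop) :
  in_pi d1 Q -> qu_transitive Q -> is_quasi_proximity d2 ->
  (forall W, Q W -> Vdelta d2 W) -> forall U, Q U -> Vdelta d1 U.
Proof.
  intros Hpi Htr Hq Hsub U HU.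
  destruct (Htr U HU) as (V&HV&HVU&Htrans).
  destruct (Hsub V HV) as (l&Hl&HW).
  destruct (TB d1 d2 Q V Hpi Hq HV l Hl (fun _ => True) (fun x y _ _ h => HW x y h))
    as (l'&Hl'&H').
  exists l'; split; auto. intros x y h. destruct (H' x y I h) as (a&h1&h2).
  apply HVU. eauto.
Qed.

Theorem corollary2p7 (X : Type) (tau : set X -> Prop)
  (d1 d2 : set X -> set X -> Prop) :
  is_topology tau ->
  is_quasi_proximity d1 -> qp_compatible d1 tau ->
  is_quasi_proximity d2 -> qp_compatible d2 tau ->
  qp_coarser d1 d2 ->
  qu_transitive (Vdelta d1) -> qu_transitive (Vdelta d2) ->
  two_in_pi_T d1 tau -> two_in_pi_T d2 tau.
Proof.
  intros Htop Hq1 Hc1 Hq2 Hc2 Hco Ht1 Ht2 (Q1&Q2&Hp1&HT1&Hp2&HT2&Hne).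
  assert (HQ : exists Q, in_pi d1 Q /\ in_T tau Q /\ ~ (forall W, Q W <-> Vdelta d1 W)).
  { destruct (classic (forall W, Q1 W <-> Vdelta d1 W)) as [E|E].
    - exists Q2; split; [exact Hp2|split; [exact HT2|]]. intro E2. apply Hne. intro W.
      specialize (E W); specialize (E2 W); tauto.
    - exists Q1; split; [exact Hp1|split; [exact HT1|exact E]]. }
  destruct HQ as (Q&HpQ&(HQq&HQc&HQt)&HnQ).
  pose proof (Vd_qu d2 Hq2 Ht2) as HVq.
  exists (Vdelta d2), (J Q (Vdelta d2)).
  split; [split; [exact HVq| apply Vd_prox; auto]|].
  split; [split; [exact HVq| split; [apply (Vd_compat tau d2 Q); auto| exact Ht2]]|].
  split; [split; [apply J_qu; auto| apply (J_prox d1); auto]|].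
  split; [split; [apply J_qu; auto| split; [apply J_compat; auto| apply J_trans; auto]]|].
  intro Heq. apply HnQ. intro W; split.
  - intro QW. apply (TB_incl d1 d2 Q HpQ HQt Hq2); auto.
    intros W' HW'. apply (Heq W'). exists W', (fun _ _ => True). repeat split; auto.
    + exists []; split; [constructor| intros; exact I].
    + intros x y [h _]; exact h.
  - apply coarsest; auto.
Qed.
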